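(* In the setting described in the context, define $$\mathcal{H}=(\mathcal{Q}+Q)^{\theta}_{(0)}-(\mathcal{P}+P)^{\theta}_{(0)}-pnl.$$ Then $\mathrm{HVA}=va(\mathcal{H}+K^{\theta})$, where $K$ is the drift of $\mathcal{Q}+Q$.
   Context: Let $(\Omega,\mathcal{A},\mathbb{Q})$ be a probability space with a filtration $\mathfrak{F}=(\mathfrak{F}_t)_{0\le t\le T}$ satisfying the usual conditions; $\mathbb{E}_t$ is conditional expectation given $\mathfrak{F}_t$. All processes are adapted, càdlàg, and integrable enough for the conditional expectations below to exist. For an integrable adapted process $X$, $va(X)_t=\mathbb{E}_t[X_T-X_t]$. A cash flow is an optional integrable process $\mathcal{Y}$ with $\mathcal{Y}_0=0$; its fair callable value is $\widetilde{va}(\mathcal{Y})_t=\sup_{\tau\in\mathcal{T}^t}\mathbb{E}_t[\mathcal{Y}_\tau-\mathcal{Y}_t]$, where $\mathcal{T}^t$ is the set of $[t,T]$-valued stopping times. Notation: $X_{(0)}=X-X_0$; $X^\theta$ is $X$ stopped at $\theta$. Data: a cash flow $\mathcal{Q}$ with fair callable value $Q=\widetilde{va}(\mathcal{Q})$; $K$ is the drift of the supermartingale $\mathcal{Q}+Q$, i.e. the unique nondecreasing integrable predictable process with $K_0=0$ such that $\mathcal{Q}+Q+K$ is a martingale on $[0,T]$; a cash flow $\mathcal{P}$ with fair value $P=va(\mathcal{P})$; semimartingales $q,p$ with $q_T=0$; stopping times $\tau_s,\theta$ with values in $[0,T]$; a martingale $h$ with $h=h^\theta$. Set $J^s=\mathbf{1}_{[0,\tau_s)}$,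 $J^e=\mathbf{1}_{[0,\theta)}$ and $$pnl=(\mathcal{Q}+J^sq+(1-J^s)Q)^{\theta}_{(0)}-(\mathcal{P}+J^sp+(1-J^s)P)^{\theta}_{(0)}-h-(1-J^e)\big(J^s_\theta q_\theta+(1-J^s_\theta)Q_\theta\big),$$ and $\mathrm{HVA}=-va(pnl)$. *)

(* Defs.v *)
From HB Require Import structures.
From mathcomp Require Import all_boot all_order all_algebra.
From mathcomp Require Import all_classical all_reals all_analysis.
Set Implicit Arguments. Unset Strict Implicit. Unset Printing Implicit Defensive.
Import Order.TTheory GRing.Theory Num.Theory.
Import numFieldNormedType.Exports.
Local Open Scope classical_set_scope.
Local Open Scope ring_scope.

Section defs.
Context {R : realType} {d : measure_display} {Om : measurableType d}.

Definition process := R -> Om -> R.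

Definition measurable_wrt (G : set (set Om)) (f : Om -> R) :=
  forall B : set R, measurable B -> G (f @^-1` B).

Definition filtration (T : R) (F : R -> set (set Om)) :=
  [/\ forall t, 0 <= t <= T -> sigma_algebra setT (F t),
      forall t A, 0 <= t <= T -> F t A -> measurable A &
      forall s t, 0 <= s -> s <= t -> t <= T -> F s `<=` F t].

Definition usual_conditions (P : probability Om R) (T : R)
    (F : R -> set (set Om)) :=
  (forall t, 0 <= t < T -> F t = \bigcap_(s in [set s | t < s <= T]) F s) /\
  (forall N, P.-negligible N -> F 0 N).

Variables (P : probability Om R) (T : R) (F : R -> set (set Om)).

Definition adapted (X : process) :=
  forall t, 0 <= t <= T -> measurable_wrt (F t) (X t).

Definition cadlag (X : process) :=
  forall w,
    (forall t, 0 <= t < T -> (fun s => X s w) @ t^'+ --> X t w) /\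
    (forall t, 0 < t <= T -> exists l : R, (fun s => X s w) @ t^'- --> l).

Definition stopping_time (tau : Om -> R) :=
  (forall w, 0 <= tau w <= T) /\
  (forall t, 0 <= t <= T -> F t [set w | tau w <= t]).

Definition stopped_value (X : process) (tau : Om -> R) : Om -> R :=
  fun w => X (tau w) w.

Definition stop (X : process) (theta : Om -> R) : process :=
  fun t w => X (Num.min t (theta w)) w.

Definition shift0 (X : process) : process := fun t w => X t w - X 0 w.

Definition rv_integrable (f : Om -> R) := P.-integrable setT (EFin \o f).

Definition cond_exp_version (G : set (set Om)) (X Y : Om -> R) :=
  [/\ measurable_wrt G Y, rv_integrable Y &
      forall A, G A ->
        (\int[P]_(w in A) (Y w)%:E = \int[P]_(w in A) (X w)%:E)%E].

Definition good_process (X : process) :=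
  [/\ adapted X, cadlag X &
      forall tau, stopping_time tau -> rv_integrable (stopped_value X tau)].

Definition martingale (X : process) :=
  [/\ adapted X, (forall t, 0 <= t <= T -> rv_integrable (X t)) &
      forall s t, 0 <= s -> s <= t -> t <= T ->
        cond_exp_version (F s) (X t) (X s)].

Definition local_martingale (M : process) :=
  adapted M /\ cadlag M /\
  exists tau : nat -> Om -> R,
    [/\ forall n, stopping_time (tau n),
        forall n w, tau n w <= tau n.+1 w,
        {ae P, forall w, exists n, tau n w = T} &
        forall n, martingale (stop M (tau n))].

Definition semimartingale (X : process) :=
  exists M A : process,
    [/\ local_martingale M /\ (forall w, M 0 w = 0),
        (adapted A /\ cadlag A), (forall w, A 0 w = 0),
        (forall w, bounded_variation 0 T (fun t => A t w)) &
        forall t w, 0 <= t <= T -> X t w = X 0 w + M t w + A t w].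

(* cash flow: optional (implied by adapted + cadlag) integrable, Y_0 = 0 *)
Definition cash_flow (Y : process) := good_process Y /\ forall w, Y 0 w = 0.

Definition is_va (X V : process) :=
  forall t, 0 <= t <= T -> cond_exp_version (F t) (fun w => X T w - X t w) (V t).

Definition dominates_callable (Y : process) (t : R) (Z : Om -> R) :=
  forall tau, stopping_time tau -> (forall w, t <= tau w) ->
    forall Yv, cond_exp_version (F t) (fun w => Y (tau w) w - Y t w) Yv ->
      {ae P, forall w, Yv w <= Z w}.

(* V = fair callable value of Y: V_t = ess sup_{tau in T^t} E_t[Y_tau - Y_t] *)
Definition is_callable_va (Y V : process) :=
  forall t, 0 <= t <= T ->
    [/\ measurable_fun setT (V t), dominates_callable Y t (V t) &
        forall Z : Om -> R, measurable_fun setT Z -> dominates_callable Y t Z ->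
          {ae P, forall w, V t w <= Z w}].

Definition predictable_rects : set (set (R * Om)) :=
  [set C | (exists s t A, [/\ 0 <= s, s < t, t <= T, F s A &
                             C = [set x : R | s < x <= t] `*` A]) \/
           (exists A, F 0 A /\ C = [set 0] `*` A)].

Definition predictable_sets :=
  <<s [set x : R | 0 <= x <= T] `*` [set: Om], predictable_rects >>.

Definition predictable (X : process) :=
  forall B : set R, measurable B ->
    predictable_sets (([set x : R | 0 <= x <= T] `*` [set: Om]) `&`
                      [set x | B (X x.1 x.2)]).

Definition is_drift (Y V K : process) :=
  [/\ predictable K /\ (adapted K /\ cadlag K), (forall w, K 0 w = 0),
      (forall w s t, 0 <= s -> s <= t -> t <= T -> K s w <= K t w),
      rv_integrable (K T) &
      martingale (fun t w => Y t w + V t w + K t w)].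

End defs.

Section pnl.
Context {R : realType} {d : measure_display} {Om : measurableType d}.

Definition ind_before (tau : Om -> R) : @process R _ Om :=
  fun t w => if t < tau w then 1 else 0.

Definition pnl (cQ Q cP P q p h : @process R _ Om) (taus theta : Om -> R)
  : process :=
  let Js := ind_before taus in
  let Je := ind_before theta in
  fun t w =>
    shift0 (stop (fun s v => cQ s v + Js s v * q s v + (1 - Js s v) * Q s v)
                 theta) t w
  - shift0 (stop (fun s v => cP s v + Js s v * p s v + (1 - Js s v) * P s v)
                 theta) t w
  - h t w
  - (1 - Je t w) * (Js (theta w) w * q (theta w) w
                    + (1 - Js (theta w) w) * Q (theta w) w).

Definition Hproc (cQ Q cP P q p h : @process R _ Om) (taus theta : Om -> R)
  : process :=
  fun t w =>
    shift0 (stop (fun s v => cQ s v + Q s v) theta) t w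
  - shift0 (stop (fun s v => cP s v + P s v) theta) t w
  - pnl cQ Q cP P q p h taus theta t w.

End pnl.

(* Main.v *)
Require Import Defs.
From HB Require Import structures.
From mathcomp Require Import all_boot all_order all_algebra.
From mathcomp Require Import all_classical all_reals all_analysis.
From mathcomp Require Import measurable_realfun lebesgue_Rintegral.
From mathcomp Require Import ring lra zify.
Set Implicit Arguments. Unset Strict Implicit. Unset Printing Implicit Defensive.
Import Order.TTheory GRing.Theory Num.Theory.
Import numFieldNormedType.Exports.
Local Open Scope classical_set_scope.
Local Open Scope ring_scope.


Definition posp {R : realType} (x : R) := Num.max x 0.
Definition clamp {R : realType} (c x : R) := Num.max (- c) (Num.min x c).

Lemma clamp_decomp {R : realType} (c x : R) : 0 <= c ->
  x = clamp c x + posp (x - c) - posp (- x - c).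
Proof.
move=> c0; rewrite /clamp /posp.
case: (leP x c) => h1; by repeat (case: leP => ?); lra.
Qed.

Section ui.
Context {R : realType} {d : measure_display} {Om : measurableType d}.
Variable (P : probability Om R).

Local Notation Int f := (P.-integrable setT (EFin \o f)).
Local Notation RI A f := (Rintegral P A f).

Lemma Int_dom (f g : Om -> R) : measurable_fun setT f -> Int g ->
  (forall w, `|f w| <= g w) -> Int f.
Proof.
move=> mf ig fg; apply: (le_integrable _ _ _ ig) => //.
  exact/measurable_EFinP.
move=> w _ /=; rewrite lee_fin (le_trans (fg w))//; exact: ler_norm.
Qed.

Lemma Int_meas (f : Om -> R) : Int f -> measurable_fun setT f.
Proof. by move=> /(measurable_int P) /measurable_EFinP. Qed.

Lemma Int_cst c : Int (fun _ => c).
Proof. exact: finite_measure_integrable_cst. Qed.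

Lemma Int_abs (f : Om -> R) : Int f -> Int (fun w => `|f w|).
Proof.
move=> hf; apply: (le_integrable _ _ _ hf) => //.
  apply/measurable_EFinP; apply: measurableT_comp => //; exact: Int_meas.
by move=> w _ /=; rewrite normr_id.
Qed.

Lemma IntD (f g : Om -> R) : Int f -> Int g -> Int (fun w => f w + g w).
Proof.
move=> hf hg; have := integrableD measurableT hf hg.
by congr (_ _ _); apply: funext.
Qed.

Lemma IntN (f : Om -> R) : Int f -> Int (fun w => - f w).
Proof.
move=> hf; have := integrableN hf.
by congr (_ _ _); apply: funext.
Qed.

Lemma IntB (f g : Om -> R) : Int f -> Int g -> Int (fun w => f w - g w).
Proof. by move=> hf hg; apply: IntD => //; exact: IntN. Qed.

Lemma IntS A (f : Om -> R) : measurable A -> Int f -> P.-integrable A (EFin \o f).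
Proof. by move=> mA; apply: integrableS. Qed.


Lemma RI_le_T A (f : Om -> R) : measurable A -> Int f -> (forall w, 0 <= f w) ->
  RI A f <= RI setT f.
Proof.
move=> mA hf f0.
have -> : RI setT f = RI A f + RI (~` A) f.
  rewrite -Rintegral_setU //; first by rewrite setUv.
  - exact: measurableC.
  - by rewrite setUv.
  - by rewrite /disj_set setICr.
rewrite lerDl; exact: Rintegral_ge0.
Qed.

Lemma cvg_le_cst (u : nat -> R) l x : u @ \oo --> l -> (forall n, u n <= x) -> l <= x.
Proof.
move=> ul ux; rewrite -(cvg_lim _ ul) //; apply: limr_le.
  by apply/cvg_ex; exists l.
by near=> n; apply: ux.
Unshelve. all: by end_near.
Qed.

Lemma cvg_ge_cst (u : nat -> R) l x : u @ \oo --> l -> (forall n, x <= u n) -> x <= l.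
Proof.
move=> ul ux; rewrite -(cvg_lim _ ul) //; apply: limr_ge.
  by apply/cvg_ex; exists l.
by near=> n; apply: ux.
Unshelve. all: by end_near.
Qed.

Lemma Rdom_cvg A (fn : nat -> Om -> R) f g : measurable A ->
  (forall n, measurable_fun setT (fn n)) -> (forall w, fn ^~ w @ \oo --> f w) ->
  Int f -> Int g -> (forall n w, `|fn n w| <= g w) ->
  RI A (fn n) @[n --> \oo] --> RI A f.
Proof.
move=> mA mfn cvf If Ig fg.
have H : (fun n => \int[P]_(x in A) (fn n x)%:E)%E @ \oo --> (RI A f)%:E.
  rewrite /Rintegral fineK; last exact: integrable_fin_num (IntS mA If).
  apply: (@dominated_cvg _ _ _ P A mA (fun n => EFin \o fn n) (EFin \o f) (EFin \o g)).
  - move=> n; apply/measurable_EFinP; exact: measurable_funS (mfn n).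
  - move=> w _; apply/fine_cvgP; split; first by near=> n.
    exact: cvf.
  - by [].
  - exact: IntS.
  - by move=> n w _ /=; rewrite lee_fin.
have H2 := fine_cvg H. exact: H2.
Unshelve. all: by end_near.
Qed.


Lemma meas_posp (f : Om -> R) c : measurable_fun setT f ->
  measurable_fun setT (fun w => posp (f w - c)).
Proof.
move=> mf; apply: (measurable_maxr (f := fun w => f w - c) (g := fun _ => 0)).
  by apply: measurable_funB => //.
exact: measurable_cst.
Qed.

Lemma meas_clamp (f : Om -> R) c : measurable_fun setT f ->
  measurable_fun setT (fun w => clamp c (f w)).
Proof.
move=> mf; apply: (measurable_maxr (f := fun _ => - c)).
  exact: measurable_cst.
by apply: (measurable_minr (f := f) (g := fun _ => c)) => //.
Qed.

Lemma posp_ge0 (x : R) : 0 <= posp x.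
Proof. by rewrite /posp le_max lexx orbT. Qed.

Lemma posp_le (x c : R) : `|posp (x - c)| <= `|x| + `|c|.
Proof.
rewrite ger0_norm ?posp_ge0 // /posp.
have := ler_norm x; have := ler_norm (- c); rewrite normrN.
have := normr_ge0 x; have := normr_ge0 c.
by case: (leP (x - c) 0) => ? ? ? ? ?; lra.
Qed.

Lemma clamp_le_c (c x : R) : 0 <= c -> `|clamp c x| <= c.
Proof.
move=> c0; rewrite ler_norml /clamp.
by case: (leP x c) => ?; [case: (leP (-c) x)|case: (leP (-c) c)] => ?; lra.
Qed.

Lemma clamp_le_abs (c x : R) : 0 <= c -> `|clamp c x| <= `|x|.
Proof.
move=> c0; rewrite ler_norml /clamp.
have := ler_norm x; have := ler_norm (- x); rewrite normrN.
by case: (leP x c) => ?; [case: (leP (-c) x)|case: (leP (-c) c)] => ? ? ?; lra.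
Qed.

Lemma clamp_lip (c a b : R) : 0 <= c -> `|clamp c a - clamp c b| <= `|a - b|.
Proof.
move=> c0; rewrite ler_norml /clamp.
have := ler_norm (a - b); have := ler_norm (- (a - b)); rewrite normrN.
case: (leP a c) => ?; [case: (leP (-c) a)|case: (leP (-c) c)] => ?;
 (case: (leP b c) => ?; [case: (leP (-c) b)|case: (leP (-c) c)] => ?); move=> ? ?; lra.
Qed.

Lemma lip_cvg (h : R -> R) (u : nat -> R) l :
  (forall a b, `|h a - h b| <= `|a - b|) ->
  u @ \oo --> l -> (fun n => h (u n)) @ \oo --> h l.
Proof.
move=> hl /cvgrPdist_lt ul; apply/cvgrPdist_lt => e e0.
near=> n; apply: le_lt_trans (hl _ _) _; near: n; exact: ul.
Unshelve. all: by end_near.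
Qed.

Lemma Int_posp (f : Om -> R) c : Int f -> Int (fun w => posp (f w - c)).
Proof.
move=> If; apply: (Int_dom (g := fun w => `|f w| + `|c|)).
- by apply: meas_posp; exact: Int_meas.
- by apply: IntD; [exact: Int_abs| exact: Int_cst].
- by move=> w; exact: posp_le.
Qed.

Lemma Int_clamp (f : Om -> R) c : 0 <= c -> Int f -> Int (fun w => clamp c (f w)).
Proof.
move=> c0 If; apply: (Int_dom (g := fun w => c)).
- by apply: meas_clamp; exact: Int_meas.
- exact: Int_cst.
- by move=> w; exact: clamp_le_c.
Qed.

Lemma RI0 A : measurable A -> RI A (fun _ => 0) = 0.
Proof. by move=> mA; rewrite Rintegral_cst // mul0r. Qed.

Lemma ui_limit A (Z Y : Om -> R) (Yn : nat -> Om -> R) : measurable A ->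
  Int Z -> Int Y -> (forall n, Int (Yn n)) ->
  (forall w, Yn ^~ w @ \oo --> Y w) ->
  (forall n, RI A (Yn n) = RI A Z) ->
  (forall n c, 0 <= c -> RI setT (fun w => posp (Yn n w - c))
                         <= RI setT (fun w => posp (Z w - c))) ->
  (forall n c, 0 <= c -> RI setT (fun w => posp (- Yn n w - c))
                         <= RI setT (fun w => posp (- Z w - c))) ->
  RI A Y = RI A Z.
Proof.
move=> mA IZ IY IYn cvY eqA hp hn.
have decA (f : Om -> R) c : 0 <= c -> Int f ->
  RI A f = RI A (fun w => clamp c (f w)) + RI A (fun w => posp (f w - c))
           - RI A (fun w => posp (- f w - c)).
  move=> c0 If.
  rewrite -RintegralD //; try (apply: IntS => //; first [exact: Int_clamp|exact: Int_posp]).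
  rewrite -RintegralB //; last by apply: IntS => //; apply: Int_posp; exact: IntN.
    by apply: eq_Rintegral => w _; rewrite -clamp_decomp.
  by apply: IntS => //; apply: IntD; [exact: Int_clamp|exact: Int_posp].
have key c : 0 <= c ->
  (RI A Z - RI setT (fun w => posp (Z w - c)) <= RI A (fun w => clamp c (Y w))) &&
  (RI A (fun w => clamp c (Y w)) <= RI A Z + RI setT (fun w => posp (- Z w - c))).
  move=> c0.
  have cv := @Rdom_cvg A (fun n w => clamp c (Yn n w)) (fun w => clamp c (Y w))
     (fun _ => c) mA.
  have {}cv : RI A (fun w => clamp c (Yn n w)) @[n --> \oo] -->
              RI A (fun w => clamp c (Y w)).
    apply: cv.
    - by move=> n; apply: meas_clamp; exact: Int_meas.
    - by move=> w; apply: (lip_cvg (h := clamp c)) => // a b; exact: clamp_lip.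
    - exact: Int_clamp.
    - exact: Int_cst.
    - by move=> n w; exact: clamp_le_c.
  apply/andP; split.
  - apply: (cvg_ge_cst cv) => n.
    have e := decA (Yn n) c c0 (IYn n); rewrite eqA in e.
    have h1 := @RI_le_T A (fun w => posp (Yn n w - c)) mA (Int_posp c (IYn n))
       (fun w => posp_ge0 _).
    have h2 := hp n c c0.
    have h3 : 0 <= RI A (fun w => posp (- Yn n w - c)).
      by apply: Rintegral_ge0 => w _; exact: posp_ge0.
    lra.
  - apply: (cvg_le_cst cv) => n.
    have e := decA (Yn n) c c0 (IYn n); rewrite eqA in e.
    have h1 := @RI_le_T A (fun w => posp (- Yn n w - c)) mA
       (Int_posp c (IntN (IYn n))) (fun w => posp_ge0 _).
    have h2 := hn n c c0.
    have h3 : 0 <= RI A (fun w => posp (Yn n w - c)).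
      by apply: Rintegral_ge0 => w _; exact: posp_ge0.
    lra.
have ev (x : R) : \forall m \near \oo, `|x| <= m%:R.
  exists (Num.truncn `|x|).+1 => // m /= hm.
  apply: ltW; apply: lt_le_trans (truncnS_gt _) _; by rewrite ler_nat.
have cv1 : RI A (fun w => clamp m%:R (Y w)) @[m --> \oo] --> RI A Y.
  apply: (@Rdom_cvg A (fun m w => clamp m%:R (Y w)) Y (fun w => `|Y w|)) => //.
  - by move=> m; apply: meas_clamp; exact: Int_meas.
  - move=> w; apply: cvg_near_cst; near=> m.
    have hm : `|Y w| <= m%:R by near: m; exact: ev.
    move: hm; rewrite ler_norml /clamp => /andP[h1 h2].
    by case: (leP (Y w) m%:R) => ?; [case: (leP (-m%:R) (Y w))|case: (leP (-m%:R) m%:R)] => ?; lra.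
  - exact: Int_abs.
  - by move=> m w; exact: clamp_le_abs.
have cvp (f : Om -> R) : Int f ->
    RI setT (fun w => posp (f w - m%:R)) @[m --> \oo] --> 0.
  move=> If; rewrite -(RI0 measurableT).
  apply: (@Rdom_cvg setT (fun m w => posp (f w - m%:R)) (fun _ => 0) (fun w => `|f w|)) => //.
  - by move=> m; apply: meas_posp; exact: Int_meas.
  - move=> w; apply: cvg_near_cst; near=> m.
    have hm : `|f w| <= m%:R by near: m; exact: ev.
    move: hm; rewrite ler_norml /posp => /andP[h1 h2].
    by case: (leP (f w - m%:R) 0) => ?; lra.
  - exact: Int_cst.
  - exact: Int_abs.
  - move=> m w; rewrite ger0_norm ?posp_ge0 // /posp.
    have := ler_norm (f w); have := normr_ge0 (f w).
    have : (0:R) <= m%:R by exact: ler0n.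
    by case: (leP (f w - m%:R) 0) => ? ? ? ?; lra.
apply/eqP; rewrite eq_le; apply/andP; split.
- have cvu : (fun m => RI A (fun w => clamp m%:R (Y w))
     - RI setT (fun w => posp (- Z w - m%:R))) @ \oo --> RI A Y - 0.
    by apply: cvgB => //; exact: (cvp _ (IntN IZ)).
  rewrite subr0 in cvu.
  apply: (cvg_le_cst cvu) => m.
  by have /andP[_ ?] := key m%:R (ler0n _ _); lra.
- have cvl : (fun m => RI A (fun w => clamp m%:R (Y w))
     + RI setT (fun w => posp (Z w - m%:R))) @ \oo --> RI A Y + 0.
    by apply: cvgD => //; exact: (cvp _ IZ).
  rewrite addr0 in cvl.
  apply: (cvg_ge_cst cvl) => m.
  by have /andP[? _] := key m%:R (ler0n _ _); lra.
Unshelve. all: by end_near.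
Qed.

End ui.


Section filt.
Context {R : realType} {d : measure_display} {Om : measurableType d}.
Variables (T : R) (F : R -> set (set Om)).
Hypothesis hF : filtration T F.

Lemma F_sa s : 0 <= s <= T -> sigma_algebra setT (F s).
Proof. by case: hF => h _ _; apply: h. Qed.

Lemma F_meas s A : 0 <= s <= T -> F s A -> measurable A.
Proof. by case: hF => _ h _; apply: h. Qed.

Lemma F_mono s u A : 0 <= s -> s <= u -> u <= T -> F s A -> F u A.
Proof. by case: hF => _ _ h h0 h1 h2 FA; exact: (h s u h0 h1 h2 A FA). Qed.

Lemma F_I s A B : 0 <= s <= T -> F s A -> F s B -> F s (A `&` B).
Proof.
move=> hs; rewrite -(measurable_g_measurableTypeE (F_sa hs)) => FA FB.
exact: measurableI.
Qed.

Lemma F_C s A : 0 <= s <= T -> F s A -> F s (~` A).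
Proof.
move=> hs; rewrite -(measurable_g_measurableTypeE (F_sa hs)) => FA.
exact: measurableC.
Qed.

Lemma F_0 s : 0 <= s <= T -> F s set0.
Proof.
move=> hs; rewrite -(measurable_g_measurableTypeE (F_sa hs)).
exact: measurable0.
Qed.

Lemma F_T s : 0 <= s <= T -> F s setT.
Proof.
move=> hs; rewrite -(measurable_g_measurableTypeE (F_sa hs)).
exact: measurableT.
Qed.


Lemma st_bnd tau : stopping_time T F tau -> forall w, 0 <= tau w <= T.
Proof. by case. Qed.

Lemma st_set tau r s : stopping_time T F tau -> r <= s -> 0 <= s <= T ->
  F s [set w | tau w <= r].
Proof.
move=> [hb hs] rs s0T; have [r0|r0] := ltP r 0.
  rewrite (_ : [set w | tau w <= r] = set0); first exact: F_0.
  apply/seteqP; split => w //= h; have /andP[h1 h2] := hb w; lra.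
have rT : 0 <= r <= T by move: s0T => /andP[? ?]; apply/andP; split; lra.
move: s0T => /andP[? ?].
apply: (@F_mono r s) => //; exact: hs.
Qed.

Lemma st_meas tau : stopping_time T F tau -> measurable_fun setT tau.
Proof.
move=> st; apply: (measurability _ (RGenOInfty.measurableE R)) => //.
move=> /= _ [_ [a ->] <-]; rewrite preimage_itvoy setTI.
rewrite (_ : [set x | a < tau x] = ~` [set w | tau w <= Num.min a T]).
  apply: measurableC; apply: (@F_meas T); last apply: (st_set st).
  - by have /andP[? ?] := st_bnd st point; apply/andP; split; lra.
  - by rewrite ge_min lexx orbT.
  - by have /andP[? ?] := st_bnd st point; apply/andP; split; lra.
apply/seteqP; split => w /=.
  by move=> h; rewrite le_min => /andP[]; lra.
have /andP[? ?] := st_bnd st w.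
rewrite le_min => /negP; rewrite negb_and -!ltNge => /orP[] //; lra.
Qed.

Lemma st_max tau a : stopping_time T F tau -> 0 <= a <= T ->
  stopping_time T F (fun w => Num.max (tau w) a).
Proof.
move=> st ha; split.
  move=> w; have /andP[? ?] := st_bnd st w; move: ha => /andP[? ?].
  by apply/andP; split; case: (leP (tau w) a) => ?; lra.
move=> s hs; have [as_|sa] := leP a s.
  rewrite (_ : [set w | Num.max (tau w) a <= s] = [set w | tau w <= s]).
    exact: st_set.
  by apply/seteqP; split => w /=; rewrite ge_max ?as_ ?andbT.
rewrite (_ : [set w | Num.max (tau w) a <= s] = set0); first exact: F_0.
apply/seteqP; split => w //=; rewrite ge_max => /andP[_]; lra.
Qed.

Lemma st_min tau a : stopping_time T F tau -> 0 <= a <= T ->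
  stopping_time T F (fun w => Num.min a (tau w)).
Proof.
move=> st ha; split.
  move=> w; have /andP[? ?] := st_bnd st w; move: ha => /andP[? ?].
  by apply/andP; split; case: (leP a (tau w)) => ?; lra.
move=> s hs; have [as_|sa] := leP a s.
  rewrite (_ : [set w | Num.min a (tau w) <= s] = setT); first exact: F_T.
  by apply/seteqP; split => w //= _; rewrite ge_min as_.
rewrite (_ : [set w | Num.min a (tau w) <= s] = [set w | tau w <= s]).
  exact: st_set.
apply/seteqP; split => w /=; rewrite ge_min; first by case/orP => //; lra.
by move=> ->; rewrite orbT.
Qed.

Lemma st_cst a : 0 <= a <= T -> stopping_time T F (fun _ => a).
Proof.
move=> ha; split => // s hs; have [as_|sa] := leP a s.
  rewrite (_ : [set w | _] = setT); first exact: F_T.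
  by apply/seteqP; split => w.
rewrite (_ : [set w | _] = set0); first exact: F_0.
by apply/seteqP; split => w //=; lra.
Qed.

End filt.

Section core.
Context {R : realType} {d : measure_display} {Om : measurableType d}.
Variables (T : R) (F : R -> set (set Om)) (P : probability Om R).
Hypothesis hF : filtration T F.
Local Notation Int f := (P.-integrable setT (EFin \o f)).
Local Notation RI A f := (Rintegral P A f).

Lemma RI_split D B (f : Om -> R) : measurable D -> measurable B -> Int f ->
  RI D f = RI (D `&` B) f + RI (D `&` ~` B) f.
Proof.
move=> mD mB If; rewrite -Rintegral_setU.
- by rewrite -setIUr setUv setIT.
- exact: measurableI.
- by apply: measurableI => //; exact: measurableC.
- rewrite -setIUr setUv setIT; exact: IntS.
- by rewrite /disj_set setIACA setICr setI0.
Qed.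

Lemma meas_gt (f : Om -> R) c : measurable_fun setT f -> measurable [set w | c < f w].
Proof.
move=> mf; have := mf measurableT _ (measurable_itv `]c, +oo[).
by rewrite setTI preimage_itvoy.
Qed.

Lemma RIN D (f : Om -> R) : measurable D -> Int f ->
  RI D (fun w => - f w) = - RI D f.
Proof.
move=> mD If; rewrite -mulN1r -RintegralZl //; last exact: IntS.
by apply: eq_Rintegral => w _; rewrite mulN1r.
Qed.

Lemma posp_RI (f : Om -> R) c : Int f ->
  RI setT (fun w => posp (f w - c)) = RI [set w | c < f w] (fun w => f w - c).
Proof.
move=> If; have mB := meas_gt c (Int_meas If).
rewrite (RI_split _ mB) //; last exact: Int_posp.
rewrite setTI (_ : RI (setT `&` ~` _) _ = 0).
  rewrite addr0; apply: eq_Rintegral => w; rewrite inE /= => h.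
  by rewrite /posp max_l //; lra.
rewrite -(RI0 P (measurableI _ _ measurableT (measurableC mB))).
apply: eq_Rintegral => w; rewrite inE /= => -[_ h].
by rewrite /posp max_r //; move/negP: h; rewrite -leNgt; lra.
Qed.

Lemma core_eq s (Xs Xu V V' : Om -> R) G D :
  0 <= s <= T ->
  (forall A, F s A -> RI A Xu = RI A Xs) ->
  F s G -> measurable D -> F s (D `&` G) ->
  Int V -> Int V' ->
  (forall w, G w -> V w = Xs w) -> (forall w, G w -> V' w = Xu w) ->
  (forall w, ~ G w -> V w = V' w) ->
  RI D V = RI D V'.
Proof.
move=> hs hm FG mD FDG IV IV' hV hV' hoff.
have mG := F_meas hF hs FG.
rewrite (RI_split mD mG IV) (RI_split mD mG IV'); congr (_ + _).
  rewrite (@eq_Rintegral _ _ _ P _ Xs); last first.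
    by move=> w; rewrite inE => -[_ Gw]; exact: hV.
  rewrite (@eq_Rintegral _ _ _ P _ Xu V'); last first.
    by move=> w; rewrite inE => -[_ Gw]; rewrite hV'.
  by rewrite hm.
by apply: eq_Rintegral => w; rewrite inE => -[_ nG]; exact: hoff.
Qed.

Lemma core_pos s (Xs Xu V V' : Om -> R) G c :
  0 <= s <= T ->
  (forall A, F s A -> RI A Xu = RI A Xs) ->
  F s [set w | c < Xs w] ->
  F s G -> Int V -> Int V' ->
  (forall w, G w -> V w = Xs w) -> (forall w, G w -> V' w = Xu w) ->
  (forall w, ~ G w -> V w = V' w) ->
  RI setT (fun w => posp (V w - c)) <= RI setT (fun w => posp (V' w - c)).
Proof.
move=> hs hm Fc FG IV IV' hV hV' hoff.
have mB := meas_gt c (Int_meas IV).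
rewrite posp_RI // RintegralB //; try (apply: IntS => //; first [exact: Int_cst | done]).
rewrite (@core_eq s Xs Xu V V' G) //; last first.
  rewrite (_ : _ `&` _ = G `&` [set w | c < Xs w]); first by apply: (F_I hF hs).
  apply/seteqP; split => w /= [h1 h2]; split => //.
    by rewrite -hV.
  by rewrite hV.
rewrite -RintegralB //; try (apply: IntS => //; first [exact: Int_cst | done]).
apply: (@le_trans _ _ (RI [set w | c < V w] (fun w => posp (V' w - c)))).
  apply: le_Rintegral => //.
  - by apply: IntS => //; apply: IntB => //; exact: Int_cst.
  - by apply: IntS => //; exact: Int_posp.
  - by move=> w _; rewrite /posp le_max lexx.
apply: RI_le_T => //; first exact: Int_posp.
by move=> w; exact: posp_ge0.
Qed.

End core.

Section disc.
Context {R : realType} {d : measure_display} {Om : measurableType d}.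
Variables (T : R) (F : R -> set (set Om)) (P : probability Om R).
Hypothesis hF : filtration T F.
Local Notation Int f := (P.-integrable setT (EFin \o f)).
Local Notation RI A f := (Rintegral P A f).
Variable X : @process R d Om.
Hypothesis hm : forall s u A, 0 <= s -> s <= u -> u <= T -> F s A ->
  RI A (X u) = RI A (X s).
Hypothesis hI : forall tau, stopping_time T F tau -> Int (fun w => X (tau w) w).
Hypothesis hA : forall s c, 0 <= s <= T ->
  F s [set w | c < X s w] /\ F s [set w | X s w < c].

Lemma disc_ost (t h : R) (N : nat) (rho : Om -> R) :
  0 <= t -> 0 < h -> t + N%:R * h = T ->
  stopping_time T F rho -> (forall w, t <= rho w) ->
  (forall k w, (k < N)%N -> t + k%:R * h < rho w -> t + k.+1%:R * h <= rho w) ->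
  [/\ forall A, F t A -> RI A (fun w => X (rho w) w) = RI A (X T),
      forall c, RI setT (fun w => posp (X (rho w) w - c))
                <= RI setT (fun w => posp (X T w - c)) &
      forall c, RI setT (fun w => posp (- X (rho w) w - c))
                <= RI setT (fun w => posp (- X T w - c))].
Proof.
move=> t0 h0 tN st trho grid.
pose tk (k : nat) := t + k%:R * h.
pose V (k : nat) := fun w => X (Num.max (rho w) (tk k)) w.
have tk_ge k : t <= tk k.
  by rewrite /tk lerDl mulr_ge0 // ?ler0n // ltW.
have tk_le k : (k <= N)%N -> tk k <= T.
  move=> kN; rewrite -tN /tk lerD2l ler_pM2r //; by rewrite ler_nat.
have tkS k : tk k <= tk k.+1.
  by rewrite /tk lerD2l ler_pM2r // ler_nat.
have tk_bnd k : (k <= N)%N -> 0 <= tk k <= T.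
  by move=> kN; apply/andP; split; [exact: le_trans (tk_ge k)|exact: tk_le].
have IV k : (k <= N)%N -> Int (V k).
  by move=> kN; apply: hI; apply: (st_max hF st); exact: tk_bnd.
have rhoT w : rho w <= T by have /andP[] := st_bnd st w.
have claim j : (j <= N)%N ->
   [/\ forall A, F t A -> RI A (V (N - j)%N) = RI A (X T),
       forall c, RI setT (fun w => posp (V (N - j)%N w - c))
                 <= RI setT (fun w => posp (X T w - c)) &
       forall c, RI setT (fun w => posp (- V (N - j)%N w - c))
                 <= RI setT (fun w => posp (- X T w - c))].
  elim: j => [|j IH] hj.
    have -> : V (N - 0)%N = X T.
      apply: funext => w; rewrite /V subn0.
      have -> : tk N = T by [].
      by rewrite max_r.
    by split => // *; exact: lexx.
  have [IH1 IH2 IH3] := IH (ltnW hj).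
  have ek : (N - j)%N = (N - j.+1).+1 by rewrite subnSK.
  rewrite ek in IH1 IH2 IH3.
  set k := (N - j.+1)%N in IH1 IH2 IH3 *.
  have kN : (k < N)%N by rewrite /k; lia.
  have bk := tk_bnd k (ltnW kN).
  have bk1 := tk_bnd k.+1 kN.
  pose G := [set w | rho w <= tk k].
  have FG : F (tk k) G by apply: (st_set hF st) => //.
  have hVk w : G w -> V k w = X (tk k) w by rewrite /G /V /= => h1; rewrite max_r.
  have hVk1 w : G w -> V k.+1 w = X (tk k.+1) w.
    by rewrite /G /V /= => h1; rewrite max_r // (le_trans h1).
  have hoff w : ~ G w -> V k w = V k.+1 w.
    rewrite /G /V /= => /negP; rewrite -ltNge => h1.
    have h2 := grid k w kN h1.
    by rewrite !max_l // ltW.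
  have mart A : F (tk k) A -> RI A (X (tk k.+1)) = RI A (X (tk k)).
    move=> FA; have /andP[b1 _] := bk; have /andP[_ b2] := bk1.
    exact: hm b1 (tkS k) b2 FA.
  split.
  - move=> A FA; rewrite -IH1 //.
    have bt : 0 <= t <= T by apply/andP; split => //; exact: le_trans (tk_ge k) (tk_le k (ltnW kN)).
    apply: (core_eq hF bk mart FG) => //.
    + exact: (F_meas hF bt).
    + apply: (F_I hF bk) => //; have /andP[b1 b2] := bk.
      exact: (F_mono hF t0 (tk_ge k) b2 FA).
    + exact: IV (ltnW kN).
    + exact: IV kN.
  - move=> c; apply: le_trans (IH2 c).
    apply: (core_pos hF bk mart _ FG) => //.
    + by have [] := hA c bk.
    + exact: IV (ltnW kN).
    + exact: IV kN.
  - move=> c; apply: le_trans (IH3 c).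
    apply: (@core_pos _ _ _ T F P hF (tk k) (fun w => - X (tk k) w)
              (fun w => - X (tk k.+1) w) (fun w => - V k w) (fun w => - V k.+1 w) G c bk).
    + move=> A FA; have mA := F_meas hF bk FA.
      rewrite !RIN //; first by rewrite mart.
      - by have := hI (st_cst hF bk).
      - by have := hI (st_cst hF bk1).
    + rewrite /=. rewrite (_ : [set w | c < - X (tk k) w] = [set w | X (tk k) w < - c]).
        by have [] := hA (- c) bk.
      by apply/seteqP; split => w /=; rewrite ltrNr.
    + exact: FG.
    + by apply: IntN; exact: IV (ltnW kN).
    + by apply: IntN; exact: IV kN.
    + by move=> w Gw; rewrite hVk.
    + by move=> w Gw; rewrite hVk1.
    + by move=> w nG; rewrite hoff.
have [h1 h2 h3] := claim N (leqnn N).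
rewrite subnn in h1 h2 h3.
have E w : X (rho w) w = V 0%N w by rewrite /V /tk mul0r addr0 max_l.
split => [A FA|c|c].
- by rewrite -h1 //; apply: eq_Rintegral => w _; rewrite E.
- by apply: le_trans (h2 c); rewrite le_eqVlt; apply/orP; left; apply/eqP; apply: eq_Rintegral => w _; rewrite E.
- by apply: le_trans (h3 c); rewrite le_eqVlt; apply/orP; left; apply/eqP; apply: eq_Rintegral => w _; rewrite E.
Qed.

End disc.


Section ost.
Context {R : realType} {d : measure_display} {Om : measurableType d}.
Variables (T : R) (F : R -> set (set Om)) (P : probability Om R).
Hypothesis hF : filtration T F.
Local Notation Int f := (P.-integrable setT (EFin \o f)).
Local Notation RI A f := (Rintegral P A f).
Variable X : @process R d Om.
Hypothesis hm : forall s u A, 0 <= s -> s <= u -> u <= T -> F s A ->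
  RI A (X u) = RI A (X s).
Hypothesis hI : forall tau, stopping_time T F tau -> Int (fun w => X (tau w) w).
Hypothesis hA : forall s c, 0 <= s <= T ->
  F s [set w | c < X s w] /\ F s [set w | X s w < c].
Hypothesis hR : forall w t, 0 <= t < T -> (fun s => X s w) @ t^'+ --> X t w.

Lemma ost1 t sigma A : 0 <= t <= T -> stopping_time T F sigma ->
  (forall w, t <= sigma w) -> F t A ->
  RI A (fun w => X (sigma w) w) = RI A (X T).
Proof.
move=> /andP[t0 tT] st tsig FA.
have sigT w : sigma w <= T by have /andP[] := st_bnd st w.
have [tT'|ltT] := eqVneq t T.
  apply: eq_Rintegral => w _; congr X.
  by apply/eqP; rewrite eq_le sigT /= -tT'.
have {ltT}tT : t < T by rewrite lt_neqAle ltT.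
pose h (n : nat) := (T - t) * (2^-1) ^+ n.
have h0 n : 0 < h n by rewrite /h mulr_gt0 ?subr_gt0 // exprn_gt0 // invr_gt0.
have hN n : t + (2 ^ n)%N%:R * h n = T.
  rewrite /h natrX mulrCA -exprMn mulfV ?expr1n ?mulr1; first lra.
  by rewrite pnatr_eq0.
pose rho (n : nat) w := t + h n * (Num.ceil ((sigma w - t) / h n))%:~R.
have rho_ge n w : sigma w <= rho n w.
  rewrite /rho -lerBlDl -ler_pdivrMl //.
  rewrite mulrC; exact: ceil_ge.
have hx n w : h n * ((sigma w - t) / h n) = sigma w - t.
  by rewrite mulrCA mulfV ?mulr1 // gt_eqF.
have rho_le n w : rho n w <= sigma w + h n.
  rewrite /rho.
  have := ceilB1_lt ((sigma w - t) / h n); rewrite intrB /= => H.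
  have := hx n w; have := h0 n; nra.
have rho_T n w : rho n w <= T.
  have H : Num.ceil ((sigma w - t) / h n) <= (2 ^ n)%N%:Z.
    rewrite ceil_le_int /=.
    have := hx n w; have := h0 n; have := hN n; have := sigT w.
    rewrite -[((2 ^ n)%N%:Z)%:~R]/((2 ^ n)%N%:R : R).
    nra.
  have := H; rewrite -(ler_int R) => H2.
  rewrite -[((2 ^ n)%N%:Z)%:~R]/((2 ^ n)%N%:R : R) in H2.
  rewrite /rho; have := hN n; have := h0 n; nra.
have rho_t n w : t <= rho n w by have := rho_ge n w; have := tsig w; lra.
have grid n k w : (k < 2 ^ n)%N -> t + k%:R * h n < rho n w ->
    t + k.+1%:R * h n <= rho n w.
  move=> _; rewrite /rho => H.
  set c := Num.ceil _ in H *.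
  have H1 : (k%:Z)%:~R < c%:~R :> R.
    rewrite -[(k%:Z)%:~R]/(k%:R : R); have := h0 n; nra.
  rewrite ltr_int in H1.
  have H2 : (k.+1%:Z <= c)%R by lia.
  rewrite -(ler_int R) -[((k.+1)%:Z)%:~R]/(k.+1%:R : R) in H2.
  have := h0 n; nra.
have st_rho n : stopping_time T F (rho n).
  split.
    move=> w; have /andP[? ?] := st_bnd st w; have := rho_T n w; have := rho_t n w.
    by move=> ? ?; apply/andP; split; lra.
  move=> s /andP[s0 sT].
  pose fl := Num.floor ((s - t) / h n).
  have hy : h n * ((s - t) / h n) = s - t by rewrite mulrCA mulfV ?mulr1 // gt_eqF.
  have flx : (fl%:~R : R) <= (s - t) / h n by exact: floor_le.
  rewrite (_ : [set w | rho n w <= s] = [set w | sigma w <= t + h n * fl%:~R]).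
    apply: (st_set hF st) => //; last by apply/andP; split.
    have := h0 n; nra.
  apply/seteqP; split => w /=.
  - rewrite /rho => H.
    have H1 : (Num.ceil ((sigma w - t) / h n))%:~R <= (s - t) / h n :> R.
      have := h0 n; nra.
    rewrite -floor_ge_int -/fl in H1.
    rewrite -(ler_int R) in H1.
    have := ceil_ge ((sigma w - t) / h n); have := hx n w; have := h0 n; nra.
  - move=> H.
    have H1 : (sigma w - t) / h n <= fl%:~R.
      have := hx n w; have := h0 n; nra.
    rewrite -ceil_le_int in H1.
    rewrite -(ler_int R) in H1.
    rewrite /rho; have := h0 n; nra.
have hcv : h n @[n --> \oo] --> 0.
  have := @cvg_geometric R (T - t) (2^-1).
  rewrite ger0_norm ?invr_ge0 ?ler0n // invf_lt1 ?ltr1n //.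
  by move=> /(_ isT).
have cvY w : (fun n => X (rho n w) w) @ \oo --> X (sigma w) w.
  have [lt|ge] := ltP (sigma w) T.
    have s0 : 0 <= sigma w by have /andP[] := st_bnd st w.
    have hRw : (fun s => X s w) @ (sigma w)^'+ --> X (sigma w) w.
      by apply: hR; rewrite s0 lt.
    move/cvgrPdist_le : hRw => H.
    apply/cvgrPdist_le => e e0.
    have [r /= r0 Hr] := H e e0.
    move/cvgrPdist_lt : hcv => /(_ r r0) hn.
    near=> n.
    have [E|ne] := eqVneq (rho n w) (sigma w).
      by rewrite E subrr normr0 ltW.
    have lt2 : sigma w < rho n w by rewrite lt_neqAle eq_sym ne rho_ge.
    apply: Hr => //=.
    have hnr : `|0 - h n| < r by near: n.
    move: hnr; rewrite sub0r normrN ger0_norm; last exact: ltW (h0 n).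
    have := rho_le n w; rewrite /ball /= ltr0_norm ?subr_lt0 //.
    lra.
  have E n : rho n w = sigma w.
    by apply/eqP; rewrite eq_le rho_ge andbT (le_trans (rho_T n w)).
  by under eq_fun do rewrite E; exact: cvg_cst.
have bt : 0 <= t <= T by apply/andP; split => //; exact: ltW.
have bT : 0 <= T <= T by apply/andP; split => //; lra.
have mA : measurable A := F_meas hF bt FA.
apply: (ui_limit (Yn := fun n w => X (rho n w) w) mA).
- by have := hI (st_cst hF bT).
- exact: hI.
- by move=> n; exact: hI.
- exact: cvY.
- move=> n.
  by have [d1 _ _] := @disc_ost _ _ _ T F P hF X hm hI hA t (h n) (2^n)%N (rho n)
      t0 (h0 n) (hN n) (st_rho n) (rho_t n) (grid n); exact: d1.
- move=> n c _.
  by have [_ d2 _] := @disc_ost _ _ _ T F P hF X hm hI hA t (h n) (2^n)%N (rho n)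
      t0 (h0 n) (hN n) (st_rho n) (rho_t n) (grid n); exact: d2.
- move=> n c _.
  by have [_ _ d3] := @disc_ost _ _ _ T F P hF X hm hI hA t (h n) (2^n)%N (rho n)
      t0 (h0 n) (hN n) (st_rho n) (rho_t n) (grid n); exact: d3.
Unshelve. all: by end_near.
Qed.


Lemma ost2 t theta A : 0 <= t <= T -> stopping_time T F theta -> F t A ->
  RI A (fun w => X (Num.min T (theta w)) w) = RI A (fun w => X (Num.min t (theta w)) w).
Proof.
move=> bt st FA.
have mA := F_meas hF bt FA.
have bT : 0 <= T <= T by case/andP: bt => ? ?; apply/andP; split => //; lra.
have stm := st_min hF st bt.
have stM := st_max hF st bt.
have stT := st_min hF st bT.
have stt := st_cst hF bt.
have tsig w : t <= Num.max (theta w) t by rewrite le_max lexx orbT.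
have E1 := ost1 bt stM tsig FA.
have E2 : RI A (X T) = RI A (X t).
  by case/andP: bt => ? ?; apply: hm.
apply/eqP; rewrite -subr_eq0 -RintegralB //; try (apply: IntS => //; exact: hI).
rewrite (@eq_Rintegral _ _ _ P _ (fun w => X (Num.max (theta w) t) w - X t w)).
  rewrite RintegralB //; try (apply: IntS => //; exact: hI).
  - by rewrite E1 E2 subrr.
move=> w _; have /andP[_ thT] := st_bnd st w.
rewrite (@min_r _ _ T) //.
case: (leP (theta w) t) => h1; last by [].
by rewrite !subrr.
Qed.

End ost.


Section mwrt.
Context {R : realType} {d : measure_display} {Om : measurableType d}.
Variable (G : set (set Om)).
Hypothesis sa : sigma_algebra setT G.

Lemma mwrtP (f : Om -> R) : measurable_wrt G f <->
  measurable_fun (setT : set (g_sigma_algebraType G)) f.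
Proof.
split.
  move=> hf _ B mB; rewrite setTI (measurable_g_measurableTypeE sa).
  exact: hf.
move=> hf B mB; have := hf measurableT B mB.
by rewrite setTI (measurable_g_measurableTypeE sa).
Qed.

Lemma mwrtD (f g : Om -> R) : measurable_wrt G f -> measurable_wrt G g ->
  measurable_wrt G (fun w => f w + g w).
Proof.
move=> /mwrtP hf /mwrtP hg; apply/mwrtP.
exact: (measurable_funD hf hg).
Qed.

Lemma mwrt_gt (f : Om -> R) c : measurable_wrt G f -> G [set w | c < f w].
Proof.
move=> hf; have := hf _ (measurable_itv `]c, +oo[).
by rewrite preimage_itvoy.
Qed.

Lemma mwrt_lt (f : Om -> R) c : measurable_wrt G f -> G [set w | f w < c].
Proof.
move=> hf; have := hf _ (measurable_itv `]-oo, c[).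
by rewrite preimage_itvNyo.
Qed.

End mwrt.

Section uniq.
Context {R : realType} {d : measure_display} {Om : measurableType d}.
Variable (P : probability Om R).
Local Notation Int f := (P.-integrable setT (EFin \o f)).
Local Notation RI A f := (Rintegral P A f).

Lemma fin_int (f : Om -> R) : measurable_fun setT f ->
  (\int[P]_x (f x)%:E)%E \is a fin_num -> Int f.
Proof.
move=> mf; rewrite integralE fin_numB => /andP[hp hn].
have mfe : measurable_fun setT (EFin \o f) by exact/measurable_EFinP.
apply/integrableP; split => //.
rewrite (_ : (fun x => `|(EFin \o f) x|)%E =
    (fun x => ((EFin \o f)^\+ x + (EFin \o f)^\- x)%E)); last first.
  by apply: funext => x; rewrite -[LHS]/((abse \o (EFin \o f)) x) fune_abse.
rewrite ge0_integralD //.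
- by rewrite lte_add_pinfty // -ge0_fin_numE // integral_ge0.
- exact: measurable_funepos.
- exact: measurable_funeneg.
Qed.

Lemma null_pos B (f : Om -> R) : measurable B -> Int f ->
  (forall w, B w -> 0 < f w) -> RI B f = 0 -> P.-negligible B.
Proof.
move=> mB If fpos h0.
have mf : measurable_fun B (EFin \o f).
  apply: measurable_funS (measurable_int P If) => //.
have := (ae_eq_integral_abs P mB mf).1.
move=> /(_ _) H.
have : ae_eq P B (EFin \o f) (cst 0%E).
  apply: H.
  rewrite (eq_integral (fun x => (f x)%:E)); last first.
    by move=> w; rewrite inE => Bw /=; rewrite gtr0_norm // fpos.
  have := integrable_fin_num mB (IntS mB If).
  by move=> /fineK <-; rewrite -/(Rintegral P B f) h0.
rewrite /ae_eq /= => Hn.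
apply: negligibleS Hn => w Bw /= Hw.
by have := Hw Bw => -[] /eqP; rewrite gt_eqF // fpos.
Qed.

Lemma uniq0 (G : set (set Om)) (D : Om -> R) : sigma_algebra setT G ->
  G `<=` measurable -> measurable_wrt G D -> Int D ->
  (forall A, G A -> RI A D = 0) -> {ae P, forall w, D w = 0}.
Proof.
move=> sa sub mD ID h0.
have N1 : P.-negligible [set w | 0 < D w].
  apply: (null_pos (f := D)) => //; first exact: (sub _ (mwrt_gt 0 mD)).
  exact: (h0 _ (mwrt_gt 0 mD)).
have N2 : P.-negligible [set w | D w < 0].
  apply: (null_pos (f := fun w => - D w)) => //.
  - exact: (sub _ (mwrt_lt 0 mD)).
  - exact: IntN.
  - by move=> w /=; rewrite oppr_gt0.
  - rewrite RIN; first by rewrite (h0 _ (mwrt_lt 0 mD)) oppr0.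
    + exact: (sub _ (mwrt_lt 0 mD)).
    + exact: ID.
rewrite /almost_everywhere /=.
apply: negligibleS (negligibleU N1 N2) => w /= hw.
have [lt|gt|eq] := ltgtP (D w) 0; [by right|by left|by []].
Qed.

End uniq.


Theorem lemma3p1 (R : realType) (d : measure_display) (Om : measurableType d)
  (QQ : probability Om R) (T : R) (F : R -> set (set Om))
  (hT : 0 <= T) (hF : filtration T F) (hU : usual_conditions QQ T F)
  (cQ Q K cP P q p h : @process R _ Om) (taus theta : Om -> R)
  (hcQ : cash_flow QQ T F cQ)
  (hQ : good_process QQ T F Q) (hQva : is_callable_va QQ T F cQ Q)
  (hK : good_process QQ T F K) (hKd : is_drift QQ T F cQ Q K)
  (hcP : cash_flow QQ T F cP)
  (hP : good_process QQ T F P) (hPva : is_va QQ T F cP P)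
  (hq : good_process QQ T F q) (hqs : semimartingale QQ T F q)
  (hqT : forall w, q T w = 0)
  (hp : good_process QQ T F p) (hps : semimartingale QQ T F p)
  (htaus : stopping_time T F taus) (htheta : stopping_time T F theta)
  (hh : good_process QQ T F h) (hhm : martingale QQ T F h)
  (hhth : {ae QQ, forall w, forall t, h t w = stop h theta t w}) :
  forall HVA W : process,
    (* HVA = - va(pnl) *)
    is_va QQ T F (pnl cQ Q cP P q p h taus theta) (fun t w => - HVA t w) ->
    (* W = va(H + K^theta) *)
    is_va QQ T F (fun t w => Hproc cQ Q cP P q p h taus theta t w
                             + stop K theta t w) W ->
    forall t, 0 <= t <= T -> {ae QQ, forall w, HVA t w = W t w}.
Proof.
move=> HVA W hHVA hW t ht.
have bT : 0 <= T <= T by apply/andP; split => //.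
have gpI (Y : @process R _ Om) : good_process QQ T F Y ->
    forall tau, stopping_time T F tau -> QQ.-integrable setT (EFin \o (fun w => Y (tau w) w)).
  by case=> _ _ H tau st; exact: H.
have gpA (Y : @process R _ Om) : good_process QQ T F Y -> adapted T F Y by case.
have gpR (Y : @process R _ Om) : good_process QQ T F Y ->
    forall w s, 0 <= s < T -> (fun u => Y u w) @ s^'+ --> Y s w.
  by case=> _ hc _ w s hs; have [h1 _] := hc w; exact: h1.
have [gcQ _] := hcQ.
have [gcP _] := hcP.
pose M u w := cQ u w + Q u w + K u w.
pose N u w := cP u w + P u w.
have [_ _ _ _ hMart] := hKd.
have [hMa hMi hMm] := hMart.
have hmM s u A : 0 <= s -> s <= u -> u <= T -> F s A ->
    Rintegral QQ A (M u) = Rintegral QQ A (M s).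
  move=> h1 h2 h3 FA; have [_ _ e] := hMm s u h1 h2 h3.
  by rewrite /Rintegral e.
have hIM tau : stopping_time T F tau -> QQ.-integrable setT (EFin \o (fun w => M (tau w) w)).
  move=> st; apply: IntD; [apply: IntD|]; exact: gpI.
have hAM s c : 0 <= s <= T -> F s [set w | c < M s w] /\ F s [set w | M s w < c].
  by move=> hs; split; [exact: mwrt_gt (hMa s hs) | exact: mwrt_lt (hMa s hs)].
have hRM w s : 0 <= s < T -> (fun u => M u w) @ s^'+ --> M s w.
  move=> hs; apply: cvgD; [apply: cvgD|]; exact: gpR.
have ostM := ost2 hF hmM hIM hAM hRM.
have hmN s u A : 0 <= s -> s <= u -> u <= T -> F s A ->
    Rintegral QQ A (N u) = Rintegral QQ A (N s).
  move=> h1 h2 h3 FA.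
  have bs : 0 <= s <= T by apply/andP; split => //; exact: le_trans h3.
  have bu : 0 <= u <= T by apply/andP; split => //; exact: le_trans h2.
  have [_ _ eS] := hPva s bs; have [_ _ eU] := hPva u bu.
  have FAu : F u A := F_mono hF h1 h2 h3 FA.
  have mA := F_meas hF bs FA.
  have IcP v : 0 <= v <= T -> QQ.-integrable setT (EFin \o cP v).
    by move=> hv; exact: (gpI _ gcP _ (st_cst hF hv)).
  have IP v : 0 <= v <= T -> QQ.-integrable setT (EFin \o P v).
    by move=> hv; exact: (gpI _ hP _ (st_cst hF hv)).
  have E1 : Rintegral QQ A (P s) = Rintegral QQ A (fun w => cP T w - cP s w).
    by rewrite /Rintegral (eS A FA).
  have E2 : Rintegral QQ A (P u) = Rintegral QQ A (fun w => cP T w - cP u w).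
    by rewrite /Rintegral (eU A FAu).
  rewrite /N !RintegralD //; try (apply: IntS => //; first [exact: IcP|exact: IP]).
  rewrite E1 E2 !RintegralB //; try (apply: IntS => //; first [exact: IcP|exact: IP]).
  lra.
have hIN tau : stopping_time T F tau -> QQ.-integrable setT (EFin \o (fun w => N (tau w) w)).
  move=> st; apply: IntD; exact: gpI.
have hAN s c : 0 <= s <= T -> F s [set w | c < N s w] /\ F s [set w | N s w < c].
  move=> hs; have mN := mwrtD (F_sa hF hs) (gpA _ gcP s hs) (gpA _ hP s hs).
  by split; [exact: mwrt_gt mN | exact: mwrt_lt mN].
have hRN w s : 0 <= s < T -> (fun u => N u w) @ s^'+ --> N s w.
  move=> hs; apply: cvgD; exact: gpR.
have ostN := ost2 hF hmN hIN hAN hRN.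
have mSV (Y : @process R _ Om) : good_process QQ T F Y ->
    forall tau, stopping_time T F tau -> measurable_fun setT (fun w => Y (tau w) w).
  by move=> gY tau st; apply: Int_meas; exact: gpI.
have mpnl u : 0 <= u <= T -> measurable_fun setT (pnl cQ Q cP P q p h taus theta u).
  move=> hu.
  have stm := st_min hF htheta hu.
  have b0 : (0:R) <= 0 <= T by rewrite lexx hT.
  have st0 := st_min hF htheta b0.
  have stu := st_cst hF hu.
  rewrite /pnl /=; rewrite /shift0 /stop /ind_before /=.
  have tS tau : stopping_time T F tau -> measurable_fun setT tau := @st_meas _ _ _ _ _ hF tau.
  repeat first
    [ apply: measurable_funB | apply: measurable_funD | apply: measurable_funM
    | apply: measurable_cst
    | apply: measurable_fun_ifT
    | apply: measurable_fun_ltr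
    | (apply: mSV; [assumption| first [exact: stm|exact: st0|exact: htheta|exact: stu]])
    | (apply: tS; first [exact: stm|exact: st0|exact: htheta|exact: stu|exact: htaus]) ].
have [mW IW eW] := hW t ht.
have [mH IH eH] := hHVA t ht.
pose pp w := pnl cQ Q cP P q p h taus theta T w - pnl cQ Q cP P q p h taus theta t w.
have mpp : measurable_fun setT pp by apply: measurable_funB; [exact: mpnl|exact: mpnl].
have Ipp : QQ.-integrable setT (EFin \o pp).
  apply: fin_int => //.
  have := eH setT (F_T hF ht); rewrite /pp => <-.
  by have := integrable_fin_num measurableT IH.
pose sM w := M (Num.min T (theta w)) w - M (Num.min t (theta w)) w.
pose sN w := N (Num.min T (theta w)) w - N (Num.min t (theta w)) w.
have stT := st_min hF htheta bT.
have stt := st_min hF htheta ht.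
have IsM : QQ.-integrable setT (EFin \o sM) by apply: IntB; exact: hIM.
have IsN : QQ.-integrable setT (EFin \o sN) by apply: IntB; exact: hIN.
pose g w := Hproc cQ Q cP P q p h taus theta T w + stop K theta T w -
            (Hproc cQ Q cP P q p h taus theta t w + stop K theta t w).
have gE w : g w = sM w - sN w - pp w.
  by rewrite /g /sM /sN /pp /M /N /Hproc /Defs.shift0 /stop /=; ring.
have Ig : QQ.-integrable setT (EFin \o g).
  have -> : g = (fun w => sM w - sN w - pp w) by apply: funext => w; rewrite gE.
  exact: IntB (IntB IsM IsN) Ipp.
pose D w := W t w + - HVA t w.
have FtS := F_sa hF ht.
have hD : forall A, F t A -> Rintegral QQ A D = 0.
  move=> A FA; have mA := F_meas hF ht FA.
  rewrite /D RintegralD //; try exact: IntS.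
  have -> : Rintegral QQ A (W t) = Rintegral QQ A g by rewrite /Rintegral (eW A FA).
  have -> : Rintegral QQ A (fun w => - HVA t w) = Rintegral QQ A pp.
    by rewrite /Rintegral (eH A FA).
  rewrite (@eq_Rintegral _ _ _ QQ _ (fun w => sM w - sN w - pp w)); last first.
    by move=> w _; exact: gE.
  rewrite (@RintegralB _ _ _ QQ A (fun w => sM w - sN w) pp) //; last 2 first.
  - by apply: IntS => //; exact: IntB.
  - exact: IntS.
  rewrite (@RintegralB _ _ _ QQ A sM sN) //; try exact: IntS.
  have -> : Rintegral QQ A sM = 0.
    rewrite (@RintegralB _ _ _ QQ A (fun w => M (Num.min T (theta w)) w)
       (fun w => M (Num.min t (theta w)) w)) //; try (apply: IntS => //; exact: hIM).
    by rewrite (ostM _ _ _ ht htheta FA) subrr.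
  have -> : Rintegral QQ A sN = 0.
    rewrite (@RintegralB _ _ _ QQ A (fun w => N (Num.min T (theta w)) w)
       (fun w => N (Num.min t (theta w)) w)) //; try (apply: IntS => //; exact: hIN).
    by rewrite (ostN _ _ _ ht htheta FA) subrr.
  lra.
have := @uniq0 _ _ _ QQ (F t) D FtS (fun A FA => F_meas hF ht FA)
  (mwrtD FtS mW mH) (IntD IW IH) hD.
apply: filterS => w /=; rewrite /D; lra.
Qed.
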